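(* There are absolute constants $B_0$ and $M$ such that the following holds. Let $k,k'$ be integers with $1\le k\le k'\le k+10$, $u_1=e^{ikx}e^{-k^2t}$, $u_2=e^{ik'y}e^{-(k')^2t}$. For every $c_1>0$ and $t_1\ge0$, with $c_2>0$ defined by $c_1e^{-k^2t_1}=c_2e^{-(k')^2t_1}$, there exist a $C^2$ complex function $u$ and a continuous $\mathbb{C}^2$-valued vector field $B$ with $|B|\le B_0$ on $\mathbb{T}^2\times[t_1,t_1+\frac7{2k}]$ such that $\dot u=\Delta u+B\cdot\nabla u$ there, and: for $t\in[t_1,t_1+\frac1{2k}]$, $u=c_1u_1$ and $B=0$; for $t\in[t_1+\frac3k,t_1+\frac7{2k}]$, $u=c_2u_2$ and $B=0$; and for $t\in[t_1,t_1+\frac7{2k}]$, $u=f(t)e^{ikx}+g(t)e^{ik'y}$ with $f,g\in C^2$ satisfying, for $0\le\alpha\le2$, $|f^{(\alpha)}(t)|\le Mc_1k^{2\alpha}e^{-k^2t}$ and $|g^{(\alpha)}(t)|\le Mc_2(k')^{2\alpha}e^{-(k')^2t}$.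
   Context: $\mathbb{T}^2=(\mathbb{R}/2\pi\mathbb{Z})^2$ with coordinates $(x,y)$; $t$ the third coordinate; $\dot u=\partial_tu$; $\Delta$ and $\nabla$ are in the spatial variables $(x,y)$, and $B\cdot\nabla u=B_1\partial_xu+B_2\partial_yu$. *)

(* Defs.v *)
From Stdlib Require Export Reals.
From Coquelicot Require Export Coquelicot.
Open Scope R_scope.

Definition cis (th : R) : C := (cos th, sin th).

Definition CDerive (h : R -> C) (s : R) : C :=
  (Derive (fun r => fst (h r)) s, Derive (fun r => snd (h r)) s).

Definition dx (u : R -> R -> R -> C) (x y t : R) : C := CDerive (fun s => u s y t) x.
Definition dy (u : R -> R -> R -> C) (x y t : R) : C := CDerive (fun s => u x s t) y.
Definition dt (u : R -> R -> R -> C) (x y t : R) : C := CDerive (fun s => u x y s) t.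

Definition laplacian (u : R -> R -> R -> C) (x y t : R) : C :=
  Cplus (dx (dx u) x y t) (dy (dy u) x y t).

Definition Bgrad (B : R -> R -> R -> C * C) (u : R -> R -> R -> C) (x y t : R) : C :=
  Cplus (Cmult (fst (B x y t)) (dx u x y t)) (Cmult (snd (B x y t)) (dy u x y t)).

Definition C2norm (v : C * C) : R := sqrt (Cmod (fst v) ^ 2 + Cmod (snd v) ^ 2).

(* the closed slab T^2 x [a,b], T^2 points represented by (x,y) in R^2 *)
Definition slab (a b : R) (p : R * R * R) : Prop := a <= snd p <= b.

Definition cont_on_slab (B : R -> R -> R -> C * C) (a b : R) : Prop :=
  forall p : R * R * R, slab a b p ->
    filterlim (fun q : R * R * R => B (fst (fst q)) (snd (fst q)) (snd q))
      (within (slab a b) (locally p))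
      (locally (B (fst (fst p)) (snd (fst p)) (snd p))).

(* 2pi-periodicity in x and y: B is a field on the torus *)
Definition torus_periodic {V : Type} (B : R -> R -> R -> V) : Prop :=
  forall x y t, B (x + 2 * PI) y t = B x y t /\ B x (y + 2 * PI) t = B x y t.

Definition C2_with (h h1 h2 : R -> C) : Prop :=
  (forall s, is_derive h s (h1 s)) /\ (forall s, is_derive h1 s (h2 s)) /\
  (forall s, continuous h2 s).

(* Main.v *)
Require Import Defs.
From Stdlib Require Import Lra Lia.
Open Scope R_scope.


Definition pp (x : R) : R := (x + Rabs x) / 2.

Lemma pp_neg x : x <= 0 -> pp x = 0.
Proof. intros; unfold pp; rewrite Rabs_left1; lra. Qed.
Lemma pp_pos x : 0 <= x -> pp x = x.
Proof. intros; unfold pp; rewrite Rabs_pos_eq; lra. Qed.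
Lemma pp_ge0 x : 0 <= pp x.
Proof. unfold pp; destruct (Rle_dec 0 x); [rewrite Rabs_pos_eq|rewrite Rabs_left1]; lra. Qed.
Lemma pp_le x a : x <= a -> 0 <= a -> pp x <= a.
Proof. intros; unfold pp; destruct (Rle_dec 0 x); [rewrite Rabs_pos_eq|rewrite Rabs_left1]; lra. Qed.

Lemma pp_cont x : continuous pp x.
Proof.
  unfold pp.
  apply (continuous_ext (fun x => (x + Rabs x) * /2)). { intros; reflexivity. }
  apply (continuous_mult (fun x => x + Rabs x) (fun _ => /2)).
  - apply (continuous_plus (fun x => x) Rabs). apply continuous_id. apply continuous_Rabs.
  - apply continuous_const.
Qed.

Lemma xabs_derive x : is_derive (fun x => x * Rabs x) x (2 * Rabs x).
Proof.
  destruct (Req_dec x 0) as [->|Hx].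
  - apply is_derive_Reals. intros eps He. exists (mkposreal eps He). intros h Hh Hd.
    simpl in Hd. replace ((0 + h) * Rabs (0 + h) - 0 * Rabs 0) with (h * Rabs h).
    2:{ rewrite Rplus_0_l; ring. }
    replace (h * Rabs h / h - 2 * Rabs 0) with (Rabs h).
    2:{ rewrite Rabs_R0. field; auto. }
    rewrite Rabs_Rabsolu; auto.
  - evar (l : R).
    assert (H : is_derive (fun x => x * Rabs x) x l).
    { apply (is_derive_mult (fun x => x) Rabs). apply is_derive_id.
      apply (is_derive_Rabs (fun x => x)). apply is_derive_id. auto.
      intros; apply Rmult_comm. }
    subst l. replace (2 * Rabs x) with (1 * Rabs x + x * (sign x * 1)); auto.
    destruct (Rle_dec 0 x).
    + rewrite sign_eq_1 by lra. rewrite Rabs_pos_eq; lra.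
    + rewrite sign_eq_m1 by lra. rewrite Rabs_left; lra.
Qed.

Lemma is_derive_eq (f : R -> R) x l l' : is_derive f x l -> l = l' -> is_derive f x l'.
Proof. intros H ->; exact H. Qed.

Lemma pp2_derive x : is_derive (fun x => pp x ^ 2) x (2 * pp x).
Proof.
  apply (is_derive_ext (fun x => /2 * (x*x + x * Rabs x))).
  { intros t; unfold pp. destruct (Rle_dec 0 t);
    [rewrite Rabs_pos_eq|rewrite Rabs_left1]; try lra; field. }
  assert (H1 : is_derive (fun x : R => x * x) x (2*x)).
  { auto_derive; auto; ring. }
  assert (H2 := xabs_derive x).
  assert (H3 := is_derive_plus _ _ _ _ _ H1 H2).
  assert (H4 := is_derive_scal _ x (/2) _ H3).
  eapply is_derive_eq. exact H4.
  unfold pp, plus, mult; simpl; field.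
Qed.

Lemma pp_mul x : x * pp x = pp x ^ 2.
Proof. destruct (Rle_dec 0 x); [rewrite pp_pos|rewrite pp_neg]; try lra; ring. Qed.

Lemma pp3_derive x : is_derive (fun x => pp x ^ 3) x (3 * pp x ^ 2).
Proof.
  apply (is_derive_ext (fun x => x * pp x ^ 2)).
  { intros t. simpl. transitivity ((t * pp t) * pp t). ring. rewrite pp_mul. ring. }
  assert (H1 := is_derive_mult (fun x : R => x) (fun x => pp x ^ 2) x _ _ (is_derive_id x) (pp2_derive x) Rmult_comm).
  eapply is_derive_eq. exact H1.
  unfold plus, mult; simpl. unfold one; simpl. replace (x*(2*pp x)) with (2*(x*pp x)) by ring. rewrite pp_mul. ring.
Qed.

Definition p3 x := pp x ^ 3.
Definition p2 x := pp x ^ 2.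

Definition S0 s := /6 * (p3 s - 3 * p3 (s-1) + 3 * p3 (s-2) - p3 (s-3)).
Definition S1 s := /2 * (p2 s - 3 * p2 (s-1) + 3 * p2 (s-2) - p2 (s-3)).
Definition S2 s := pp s - 3 * pp (s-1) + 3 * pp (s-2) - pp (s-3).

Lemma p3_ex x : ex_derive p3 x. Proof. eexists; apply pp3_derive. Qed.
Lemma p2_ex x : ex_derive p2 x. Proof. eexists; apply pp2_derive. Qed.
Lemma p3_D x : Derive p3 x = 3 * p2 x. Proof. apply is_derive_unique, pp3_derive. Qed.
Lemma p2_D x : Derive p2 x = 2 * pp x. Proof. apply is_derive_unique, pp2_derive. Qed.

Lemma S0_derive s : is_derive S0 s (S1 s).
Proof.
  unfold S0. auto_derive.
  - repeat split; apply p3_ex.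
  - rewrite !p3_D. unfold S1, Rminus. field.
Qed.

Lemma S1_derive s : is_derive S1 s (S2 s).
Proof.
  unfold S1. auto_derive.
  - repeat split; apply p2_ex.
  - rewrite !p2_D. unfold S2, Rminus. field.
Qed.

Lemma cplus (f g : R -> R) x : continuous f x -> continuous g x -> continuous (fun x => f x + g x) x.
Proof. apply (continuous_plus f g x). Qed.
Lemma cmult (f g : R -> R) x : continuous f x -> continuous g x -> continuous (fun x => f x * g x) x.
Proof. apply (continuous_mult f g x). Qed.
Lemma cminus (f g : R -> R) x : continuous f x -> continuous g x -> continuous (fun x => f x - g x) x.
Proof. intros. apply (continuous_minus f g x); auto. Qed.
Lemma cconst (c x : R) : continuous (fun _ : R => c) x.
Proof. apply continuous_const. Qed.
Lemma cpp_shift (a x : R) : continuous (fun s => pp (s - a)) x.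
Proof. apply (continuous_comp (fun s => s - a) pp). apply cminus. apply continuous_id. apply cconst. apply pp_cont. Qed.

Lemma S2_cont s : continuous S2 s.
Proof.
  unfold S2.
  apply (cminus (fun s => pp s - 3 * pp (s-1) + 3 * pp (s-2)) (fun s => pp (s-3))); [|apply cpp_shift].
  apply (cplus (fun s => pp s - 3 * pp (s-1)) (fun s => 3 * pp (s-2))).
  apply (cminus pp (fun s => 3 * pp (s-1))). apply pp_cont.
  apply (cmult (fun _ => 3) (fun s => pp (s-1))). apply cconst. apply cpp_shift.
  apply (cmult (fun _ => 3) (fun s => pp (s-2))). apply cconst. apply cpp_shift.
Qed.

Lemma S_lo s : s <= 0 -> S0 s = 0 /\ S1 s = 0.
Proof.
  intros H. unfold S0, S1, p3, p2. rewrite !pp_neg by lra. split; ring.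
Qed.

Lemma S_hi s : 3 <= s -> S0 s = 1 /\ S1 s = 0 /\ S2 s = 0.
Proof.
  intros H. unfold S0, S1, S2, p3, p2. rewrite !pp_pos by lra. split; [|split]; field.
Qed.

Lemma S_bnd s : Rabs (S0 s) <= 36 /\ Rabs (S1 s) <= 36 /\ Rabs (S2 s) <= 36.
Proof.
  destruct (Rle_dec 3 s) as [H|H].
  - destruct (S_hi s H) as [-> [-> ->]]. rewrite Rabs_R1, Rabs_R0. lra.
  - assert (B : forall a, 0 <= a -> pp (s - a) <= 3 /\ 0 <= pp (s-a)).
    { intros a Ha. split. apply pp_le; lra. apply pp_ge0. }
    assert (B0 : pp s <= 3 /\ 0 <= pp s). { split. apply pp_le; lra. apply pp_ge0. }
    destruct (B 1) as [a1 b1]; try lra. destruct (B 2) as [a2 b2]; try lra.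
    destruct (B 3) as [a3 b3]; try lra. destruct B0 as [a0 b0].
    unfold S0, S1, S2, p3, p2.
    set (q0 := pp s) in *. set (q1 := pp (s-1)) in *. set (q2 := pp (s-2)) in *. set (q3 := pp (s-3)) in *.
    assert (forall q, 0 <= q -> q <= 3 -> 0 <= q^2 <= 9 /\ 0 <= q^3 <= 27).
    { intros q h1 h2. split; split; nra. }
    destruct (H0 q0) as [[c0 d0] [e0 f0]]; auto.
    destruct (H0 q1) as [[c1 d1] [e1 f1]]; auto.
    destruct (H0 q2) as [[c2 d2] [e2 f2]]; auto.
    destruct (H0 q3) as [[c3 d3] [e3 f3]]; auto.
    repeat split; apply Rabs_le; split; lra.
Qed.


Lemma is_derive_pair (f g : R -> R) x lf lg :
  is_derive f x lf -> is_derive g x lg ->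
  @is_derive R_AbsRing (prod_NormedModule R_AbsRing R_NormedModule R_NormedModule)
    (fun t => (f t, g t)) x (lf, lg).
Proof.
  intros Hf Hg.
  assert (H1 := is_derive_scal_l f x lf ((1,0) : prod_NormedModule R_AbsRing R_NormedModule R_NormedModule) Hf).
  assert (H2 := is_derive_scal_l g x lg ((0,1) : prod_NormedModule R_AbsRing R_NormedModule R_NormedModule) Hg).
  assert (H3 := is_derive_plus _ _ _ _ _ H1 H2).
  assert (E : forall t a b : R, plus (scal a ((1,0) : prod_NormedModule R_AbsRing R_NormedModule R_NormedModule)) (scal b (0,1)) = (a, b)).
  { intros t a b. unfold plus, scal; simpl. unfold prod_plus, prod_scal; simpl.
    change plus with Rplus; change scal with Rmult. f_equal; simpl; ring. }
  assert (H4 : forall l', l' = (lf, lg) -> @is_derive R_AbsRing (prod_NormedModule R_AbsRing R_NormedModule R_NormedModule)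
    (fun t => (f t, g t)) x l').
  { intros l' Hl. assert (Hl' : l' = plus (scal lf ((1,0) : prod_NormedModule R_AbsRing R_NormedModule R_NormedModule)) (scal lg (0,1))).
    { rewrite Hl. symmetry. apply (E x). }
    rewrite Hl'.
    eapply is_derive_ext. 2: exact H3. intros t. simpl. apply (E t). }
  apply H4. reflexivity.
Qed.

Lemma cont_pair {U V W : UniformSpace} (f : U -> V) (g : U -> W) x :
  continuous f x -> continuous g x -> continuous (fun t => (f t, g t)) x.
Proof.
  intros Hf Hg. apply (continuous_comp_2 f g (fun a b => (a, b))); auto.
  apply (continuous_ext (fun y => y)). intros [a b]; reflexivity. apply continuous_id.
Qed.

Lemma is_derive_RtoC (f : R -> R) x l : is_derive f x l ->
  @is_derive R_AbsRing (prod_NormedModule R_AbsRing R_NormedModule R_NormedModule)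
    (fun t => RtoC (f t)) x (RtoC l).
Proof. intros H. apply is_derive_pair; auto. apply (is_derive_const 0). Qed.

Lemma cont_ex (f : R -> R) x : ex_derive f x -> continuous f x.
Proof. apply (@ex_derive_continuous R_AbsRing R_NormedModule). Qed.

Lemma C2_gen E a t1 (h h1 h2 : R -> R) :
  (forall s, is_derive h s (h1 s)) -> (forall s, is_derive h1 s (h2 s)) -> (forall s, continuous h2 s) ->
  C2_with (fun t => RtoC (E * exp (- a * (t - t1)) * h t))
          (fun t => RtoC (E * exp (- a * (t - t1)) * (h1 t - a * h t)))
          (fun t => RtoC (E * exp (- a * (t - t1)) * (h2 t - 2 * a * h1 t + a ^ 2 * h t))).
Proof.
  intros D1 D2 C2. split; [|split].
  - intros s. apply is_derive_RtoC.
    assert (X : ex_derive h s) by (eexists; apply D1).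
    auto_derive; auto. replace (Derive (fun x => h x) s) with (h1 s) by (symmetry; apply is_derive_unique; apply D1). unfold Rminus; ring.
  - intros s. apply is_derive_RtoC.
    assert (X : ex_derive h s) by (eexists; apply D1).
    assert (X1 : ex_derive h1 s) by (eexists; apply D2).
    auto_derive; auto. replace (Derive (fun x => h x) s) with (h1 s) by (symmetry; apply is_derive_unique; apply D1). replace (Derive (fun x => h1 x) s) with (h2 s) by (symmetry; apply is_derive_unique; apply D2). unfold Rminus; ring.
  - intros s. apply cont_pair; [|apply continuous_const].
    apply (continuous_mult (fun t => E * exp (- a * (t - t1))) (fun t => h2 t - 2 * a * h1 t + a ^ 2 * h t)).
    + apply cont_ex. auto_derive; auto.
    + apply (continuous_plus (fun t => h2 t - 2 * a * h1 t) (fun t => a^2 * h t)).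
      apply (continuous_minus h2 (fun t => 2 * a * h1 t)). auto.
      apply cont_ex. assert (X1 : ex_derive h1 s) by (eexists; apply D2). auto_derive; auto.
      apply cont_ex. assert (X : ex_derive h s) by (eexists; apply D1). auto_derive; auto.
Qed.


Definition uu (k k' : R) (F G : R -> R) (x y t : R) : C :=
  Cplus (Cmult (RtoC (F t)) (cis (k * x))) (Cmult (RtoC (G t)) (cis (k' * y))).

Lemma uu_fst k k' F G x y t : fst (uu k k' F G x y t) = F t * cos (k*x) + G t * cos (k'*y).
Proof. unfold uu, cis, Cplus, Cmult, RtoC; simpl. ring. Qed.
Lemma uu_snd k k' F G x y t : snd (uu k k' F G x y t) = F t * sin (k*x) + G t * sin (k'*y).
Proof. unfold uu, cis, Cplus, Cmult, RtoC; simpl. ring. Qed.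

Lemma D_x1 k A c x : Derive (fun r => A * cos (k*r) + c) x = - (k * A * sin (k*x)).
Proof. apply is_derive_unique. auto_derive; auto. ring. Qed.
Lemma D_x2 k A c x : Derive (fun r => A * sin (k*r) + c) x = k * A * cos (k*x).
Proof. apply is_derive_unique. auto_derive; auto. ring. Qed.
Lemma D_x3 k A c x : Derive (fun r => - (k * A * sin (k*r)) + c) x = - (k*k * A * cos (k*x)).
Proof. apply is_derive_unique. auto_derive; auto. ring. Qed.
Lemma D_x4 k A c x : Derive (fun r => k * A * cos (k*r) + c) x = - (k * k * A * sin (k*x)).
Proof. apply is_derive_unique. auto_derive; auto. ring. Qed.

Lemma dx_uu k k' F G x y t : dx (uu k k' F G) x y t = (- (k * F t * sin (k*x)), k * F t * cos (k*x)).
Proof.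
  unfold dx, CDerive. f_equal.
  - rewrite (Derive_ext _ (fun r => F t * cos (k*r) + G t * cos (k'*y))) by (intros; apply uu_fst). apply D_x1.
  - rewrite (Derive_ext _ (fun r => F t * sin (k*r) + G t * sin (k'*y))) by (intros; apply uu_snd). apply D_x2.
Qed.

Lemma dy_uu k k' F G x y t : dy (uu k k' F G) x y t = (- (k' * G t * sin (k'*y)), k' * G t * cos (k'*y)).
Proof.
  unfold dy, CDerive. f_equal.
  - rewrite (Derive_ext _ (fun r => G t * cos (k'*r) + F t * cos (k*x))) by (intros; rewrite uu_fst; ring). apply D_x1.
  - rewrite (Derive_ext _ (fun r => G t * sin (k'*r) + F t * sin (k*x))) by (intros; rewrite uu_snd; ring). apply D_x2.
Qed.

Lemma dxx_uu k k' F G x y t : dx (dx (uu k k' F G)) x y t = (- (k * k * F t * cos (k*x)), - (k * k * F t * sin (k*x))).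
Proof.
  unfold dx at 1, CDerive at 1. f_equal.
  - rewrite (Derive_ext _ (fun r => - (k * F t * sin (k*r)) + 0)) by (intros; rewrite dx_uu; simpl; ring). apply D_x3.
  - rewrite (Derive_ext _ (fun r => k * F t * cos (k*r) + 0)) by (intros; rewrite dx_uu; simpl; ring). apply D_x4.
Qed.

Lemma dyy_uu k k' F G x y t : dy (dy (uu k k' F G)) x y t = (- (k' * k' * G t * cos (k'*y)), - (k' * k' * G t * sin (k'*y))).
Proof.
  unfold dy at 1, CDerive at 1. f_equal.
  - rewrite (Derive_ext _ (fun r => - (k' * G t * sin (k'*r)) + 0)) by (intros; rewrite dy_uu; simpl; ring). apply D_x3.
  - rewrite (Derive_ext _ (fun r => k' * G t * cos (k'*r) + 0)) by (intros; rewrite dy_uu; simpl; ring). apply D_x4.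
Qed.

Lemma dt_uu k k' F G F' G' x y t : (forall s, is_derive F s (F' s)) -> (forall s, is_derive G s (G' s)) ->
  dt (uu k k' F G) x y t = (F' t * cos (k*x) + G' t * cos (k'*y), F' t * sin (k*x) + G' t * sin (k'*y)).
Proof.
  intros HF HG. unfold dt, CDerive. f_equal.
  - rewrite (Derive_ext _ (fun r => F r * cos (k*x) + G r * cos (k'*y))) by (intros; apply uu_fst).
    apply is_derive_unique.
    assert (ex_derive F t) by (eexists; apply HF). assert (ex_derive G t) by (eexists; apply HG).
    auto_derive; auto.
    replace (Derive (fun x => F x) t) with (F' t) by (symmetry; apply is_derive_unique; apply HF).
    replace (Derive (fun x => G x) t) with (G' t) by (symmetry; apply is_derive_unique; apply HG). ring.
  - rewrite (Derive_ext _ (fun r => F r * sin (k*x) + G r * sin (k'*y))) by (intros; apply uu_snd).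
    apply is_derive_unique.
    assert (ex_derive F t) by (eexists; apply HF). assert (ex_derive G t) by (eexists; apply HG).
    auto_derive; auto.
    replace (Derive (fun x => F x) t) with (F' t) by (symmetry; apply is_derive_unique; apply HF).
    replace (Derive (fun x => G x) t) with (G' t) by (symmetry; apply is_derive_unique; apply HG). ring.
Qed.

From Stdlib Require Import Reals.Nsatz.
Open Scope R_scope.

Definition BB (k k' : R) (be ga : R -> R) (x y t : R) : C * C :=
  ((be t * (sin (k'*y) * cos (k*x) - cos (k'*y) * sin (k*x)),
    - (be t * (cos (k'*y) * cos (k*x) + sin (k'*y) * sin (k*x)))),
   (ga t * (sin (k*x) * cos (k'*y) - cos (k*x) * sin (k'*y)),
    - (ga t * (cos (k*x) * cos (k'*y) + sin (k*x) * sin (k'*y))))).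

Lemma pde_gen k k' F G F' G' be ga x y t :
  (forall s, is_derive F s (F' s)) -> (forall s, is_derive G s (G' s)) ->
  F' t + k^2 * F t = ga t * k' * G t -> G' t + k'^2 * G t = be t * k * F t ->
  dt (uu k k' F G) x y t = Cplus (laplacian (uu k k' F G) x y t) (Bgrad (BB k k' be ga) (uu k k' F G) x y t).
Proof.
  intros HF HG E1 E2.
  rewrite (dt_uu _ _ _ _ _ _ _ _ _ HF HG).
  unfold laplacian, Bgrad. rewrite dxx_uu, dyy_uu, dx_uu, dy_uu. unfold BB, Cplus, Cmult; simpl.
  assert (T1 := sin2_cos2 (k*x)). assert (T2 := sin2_cos2 (k'*y)). unfold Rsqr in T1, T2.
  set (a := cos (k*x)) in *. set (b := sin (k*x)) in *. set (c := cos (k'*y)) in *. set (d := sin (k'*y)) in *.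
  simpl in E1, E2. rewrite Rmult_1_r in E1, E2.
  f_equal; nsatz.
Qed.


Lemma exp_le a b : a <= b -> exp a <= exp b.
Proof. intros H. destruct (Rle_lt_or_eq_dec _ _ H) as [H'|H']. left; apply exp_increasing; auto. rewrite H'; lra. Qed.

Lemma exp_mul a b c : a + b = c -> exp a * exp b = exp c.
Proof. intros <-. rewrite exp_plus; reflexivity. Qed.

Lemma bnd (E c a t1 t h M P : R) : 0 < c -> c * exp (- a * t1) = E -> Rabs h <= M * P ->
  Cmod (RtoC (E * exp (- a * (t - t1)) * h)) <= M * c * P * exp (- a * t).
Proof.
  intros Hc HE Hh. rewrite Cmod_R, <- HE, !Rabs_mult.
  rewrite (Rabs_pos_eq c), (Rabs_pos_eq (exp _)), (Rabs_pos_eq (exp (-a*(t-t1)))); try lra;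
    try (left; apply exp_pos).
  rewrite <- (exp_mul (- a * t1) (- a * (t - t1)) (- a * t)) by ring.
  assert (0 < exp (-a*t1)) by apply exp_pos. assert (0 < exp (-a*(t-t1))) by apply exp_pos.
  assert (0 < c * exp (-a*t1) * exp (-a*(t-t1))) by (repeat apply Rmult_lt_0_compat; auto).
  replace (M * c * P * (exp (- a * t1) * exp (- a * (t - t1)))) with (c * exp (-a*t1) * exp (-a*(t-t1)) * (M*P)) by ring.
  apply Rmult_le_compat_l; lra.
Qed.

Lemma per_cos (n : nat) x : cos (INR n * (x + 2 * PI)) = cos (INR n * x).
Proof. rewrite <- (cos_period (INR n * x) n). f_equal. ring. Qed.
Lemma per_sin (n : nat) x : sin (INR n * (x + 2 * PI)) = sin (INR n * x).
Proof. rewrite <- (sin_period (INR n * x) n). f_equal. ring. Qed.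

Lemma BB_per (n n' : nat) be ga : torus_periodic (BB (INR n) (INR n') be ga).
Proof. intros x y t. unfold BB. rewrite !per_cos, !per_sin. split; reflexivity. Qed.

Lemma BB_zero k k' be ga x y t : be t = 0 -> ga t = 0 -> BB k k' be ga x y t = (RtoC 0, RtoC 0).
Proof. intros H1 H2. unfold BB, RtoC. rewrite H1, H2. f_equal; f_equal; ring. Qed.

Lemma BB_norm k k' be ga x y t : C2norm (BB k k' be ga x y t) <= Rabs (be t) + Rabs (ga t).
Proof.
  unfold C2norm, BB, Cmod; simpl.
  assert (T1 := sin2_cos2 (k*x)). assert (T2 := sin2_cos2 (k'*y)). unfold Rsqr in T1, T2.
  set (a := cos (k*x)) in *. set (b := sin (k*x)) in *. set (c := cos (k'*y)) in *. set (d := sin (k'*y)) in *.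
  set (B := be t). set (G := ga t).
  assert (E1 : (B * (d * a - c * b) * ((B * (d * a - c * b)) * 1) + - (B * (c * a + d * b)) * (- (B * (c * a + d * b)) * 1)) = B * B).
  { nsatz. }
  assert (E2 : (G * (b * c - a * d) * ((G * (b * c - a * d)) * 1) + - (G * (a * c + b * d)) * (- (G * (a * c + b * d)) * 1)) = G * G).
  { nsatz. }
  rewrite E1, E2.
  rewrite !Rmult_1_r, !sqrt_sqrt by nra.
  rewrite <- sqrt_Rsqr by (apply Rplus_le_le_0_compat; apply Rabs_pos).
  apply sqrt_le_1_alt. unfold Rsqr.
  assert (0 <= Rabs B * Rabs G) by (apply Rmult_le_pos; apply Rabs_pos).
  replace (B*B) with (Rabs B * Rabs B) by (rewrite <- Rabs_mult; apply Rabs_pos_eq; nra).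
  replace (G*G) with (Rabs G * Rabs G) by (rewrite <- Rabs_mult; apply Rabs_pos_eq; nra).
  nra.
Qed.

Lemma cmultU {U : UniformSpace} (f g : U -> R) x : continuous f x -> continuous g x -> continuous (fun x => f x * g x) x.
Proof. apply (continuous_mult f g x). Qed.
Lemma cplusU {U : UniformSpace} (f g : U -> R) x : continuous f x -> continuous g x -> continuous (fun x => f x + g x) x.
Proof. apply (continuous_plus f g x). Qed.
Lemma cminusU {U : UniformSpace} (f g : U -> R) x : continuous f x -> continuous g x -> continuous (fun x => f x - g x) x.
Proof. apply (continuous_minus f g x). Qed.
Lemma coppU {U : UniformSpace} (f : U -> R) x : continuous f x -> continuous (fun x => - f x) x.
Proof. apply (continuous_opp f x). Qed.
Lemma csinU {U : UniformSpace} (f : U -> R) x : continuous f x -> continuous (fun x => sin (f x)) x.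
Proof. intros H. apply (continuous_comp f sin); auto. apply (@ex_derive_continuous R_AbsRing R_NormedModule). auto_derive; auto. Qed.
Lemma ccosU {U : UniformSpace} (f : U -> R) x : continuous f x -> continuous (fun x => cos (f x)) x.
Proof. intros H. apply (continuous_comp f cos); auto. apply (@ex_derive_continuous R_AbsRing R_NormedModule). auto_derive; auto. Qed.
Lemma cconstU {U : UniformSpace} (c : R) x : continuous (fun _ : U => c) x.
Proof. apply continuous_const. Qed.

Ltac cont_tac := repeat match goal with
  | |- continuous (fun q => @?f q * @?g q) _ => apply (cmultU f g)
  | |- continuous (fun q => @?f q + @?g q) _ => apply (cplusU f g)
  | |- continuous (fun q => @?f q - @?g q) _ => apply (cminusU f g)
  | |- continuous (fun q => - @?f q) _ => apply (coppU f)
  | |- continuous (fun q => sin (@?f q)) _ => apply (csinU f)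
  | |- continuous (fun q => cos (@?f q)) _ => apply (ccosU f)
  | |- continuous (fun q => ?c) _ => apply cconstU
  end.

Lemma BB_cont k k' be ga a b : (forall t, continuous be t) -> (forall t, continuous ga t) ->
  cont_on_slab (BB k k' be ga) a b.
Proof.
  intros Hb Hg [[x y] t] _.
  eapply filterlim_filter_le_1. apply filter_le_within.
  change (continuous (fun q : R * R * R => BB k k' be ga (fst (fst q)) (snd (fst q)) (snd q)) ((x,y),t)).
  assert (cx : continuous (fun q : R * R * R => fst (fst q)) ((x,y),t)).
  { apply (continuous_comp fst fst). apply continuous_fst. apply continuous_fst. }
  assert (cy : continuous (fun q : R * R * R => snd (fst q)) ((x,y),t)).
  { apply (continuous_comp fst snd). apply continuous_fst. apply continuous_snd. }
  assert (cb : continuous (fun q : R * R * R => be (snd q)) ((x,y),t)).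
  { apply (continuous_comp snd be). apply continuous_snd. apply Hb. }
  assert (cg : continuous (fun q : R * R * R => ga (snd q)) ((x,y),t)).
  { apply (continuous_comp snd ga). apply continuous_snd. apply Hg. }
  unfold BB.
  apply cont_pair; apply cont_pair; cont_tac; auto.
Qed.


Definition sg k t1 t := 3 * k * (t - t1) - 3/2.
Definition phi k t1 t := 1 - S0 (sg k t1 t - 3).
Definition phi1 k t1 t := - (3 * k * S1 (sg k t1 t - 3)).
Definition phi2 k t1 t := - (9 * k^2 * S2 (sg k t1 t - 3)).
Definition psi k t1 t := S0 (sg k t1 t).
Definition psi1 k t1 t := 3 * k * S1 (sg k t1 t).
Definition psi2 k t1 t := 9 * k^2 * S2 (sg k t1 t).

Lemma DS0 z : Derive S0 z = S1 z. Proof. apply is_derive_unique, S0_derive. Qed.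
Lemma DS1 z : Derive S1 z = S2 z. Proof. apply is_derive_unique, S1_derive. Qed.
Lemma exS0 z : ex_derive S0 z. Proof. eexists; apply S0_derive. Qed.
Lemma exS1 z : ex_derive S1 z. Proof. eexists; apply S1_derive. Qed.

Lemma phi_d k t1 s : is_derive (phi k t1) s (phi1 k t1 s).
Proof. unfold phi, phi1, sg. auto_derive. apply exS0. rewrite DS0. unfold Rminus; ring. Qed.
Lemma phi1_d k t1 s : is_derive (phi1 k t1) s (phi2 k t1 s).
Proof. unfold phi1, phi2, sg. auto_derive. apply exS1. rewrite DS1. unfold Rminus; ring. Qed.
Lemma phi2_c k t1 s : continuous (phi2 k t1) s.
Proof.
  unfold phi2. apply coppU. apply cmultU. apply cconstU.
  apply (continuous_comp (fun s => sg k t1 s - 3) S2). apply cont_ex. unfold sg; auto_derive; auto.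
  apply S2_cont.
Qed.
Lemma psi_d k t1 s : is_derive (psi k t1) s (psi1 k t1 s).
Proof. unfold psi, psi1, sg. auto_derive. apply exS0. rewrite DS0. unfold Rminus; ring. Qed.
Lemma psi1_d k t1 s : is_derive (psi1 k t1) s (psi2 k t1 s).
Proof. unfold psi1, psi2, sg. auto_derive. apply exS1. rewrite DS1. unfold Rminus; ring. Qed.
Lemma psi2_c k t1 s : continuous (psi2 k t1) s.
Proof.
  unfold psi2. apply cmultU. apply cconstU.
  apply (continuous_comp (fun s => sg k t1 s) S2). apply cont_ex. unfold sg; auto_derive; auto.
  apply S2_cont.
Qed.

Lemma Sb z : -36 <= S0 z <= 36 /\ -36 <= S1 z <= 36 /\ -36 <= S2 z <= 36.
Proof. destruct (S_bnd z) as [a [b c]]. apply Rabs_le_between in a, b, c. auto. Qed.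

Lemma hb1 k t1 t : Rabs (phi k t1 t) <= 600 * 1.
Proof. unfold phi. destruct (Sb (sg k t1 t - 3)) as [a [b c]]. apply Rabs_le; lra. Qed.
Lemma hb2 k t1 t : 1 <= k -> Rabs (phi1 k t1 t - k^2 * phi k t1 t) <= 600 * k^2.
Proof. intros Hk. unfold phi, phi1. destruct (Sb (sg k t1 t - 3)) as [a [b c]]. apply Rabs_le; split; nra. Qed.
Lemma hb3 k t1 t : 1 <= k -> Rabs (phi2 k t1 t - 2 * k^2 * phi1 k t1 t + (k^2)^2 * phi k t1 t) <= 600 * k^4.
Proof.
  intros Hk. unfold phi, phi1, phi2. destruct (Sb (sg k t1 t - 3)) as [a [b c]].
  set (p := S0 _) in *. set (q := S1 _) in *. set (r := S2 _) in *.
  assert (1 <= k^2) by nra. assert (k^2 <= k^4) by nra. assert (k^3 <= k^4) by nra.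
  assert (0 <= k^3) by nra.
  assert (-36 * k^2 <= k^2 * r <= 36*k^2) by (split; nra).
  assert (-36 * k^3 <= k^3 * q <= 36*k^3) by (split; nra).
  assert (-36 * k^4 <= k^4 * p <= 36*k^4) by (split; nra).
  apply Rabs_le. replace (- (9 * k ^ 2 * r) - 2 * k ^ 2 * - (3 * k * q) + (k ^ 2) ^ 2 * (1 - p))
    with (- 9 * (k^2 * r) + 6 * (k^3 * q) + k^4 - k^4 * p) by ring. split; nra.
Qed.
Lemma gb1 k t1 t : Rabs (psi k t1 t) <= 600 * 1.
Proof. unfold psi. destruct (Sb (sg k t1 t)) as [a [b c]]. apply Rabs_le; lra. Qed.
Lemma gb2 k k' t1 t : 1 <= k -> k <= k' -> Rabs (psi1 k t1 t - k'^2 * psi k t1 t) <= 600 * k'^2.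
Proof. intros Hk Hk'. unfold psi, psi1. destruct (Sb (sg k t1 t)) as [a [b c]].
  set (p := S0 _) in *. set (q := S1 _) in *.
  assert (-36 * k <= k * q <= 36*k) by (split; nra).
  assert (-36 * k'^2 <= k'^2 * p <= 36*k'^2) by (split; nra).
  assert (k <= k'^2) by nra.
  apply Rabs_le. match goal with |- ?G => idtac G end. split; lra. Qed.
Lemma gb3 k k' t1 t : 1 <= k -> k <= k' -> Rabs (psi2 k t1 t - 2 * k'^2 * psi1 k t1 t + (k'^2)^2 * psi k t1 t) <= 600 * k'^4.
Proof.
  intros Hk Hk'. unfold psi, psi1, psi2. destruct (Sb (sg k t1 t)) as [a [b c]].
  set (p := S0 _) in *. set (q := S1 _) in *. set (r := S2 _) in *.
  assert (1 <= k'^2) by nra. assert (k^2 <= k'^2) by nra. assert (k'^2 <= k'^4) by nra.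
  assert (k'^2 * k <= k'^4) by nra. assert (0 <= k'^2 * k) by nra. assert (0 <= k'^4) by nra.
  assert (-36 * k^2 <= k^2 * r <= 36*k^2) by (split; nra).
  assert (-36 * (k'^2*k) <= (k'^2*k) * q <= 36*(k'^2*k)) by (split; nra).
  assert (-36 * k'^4 <= k'^4 * p <= 36*k'^4) by (split; nra).
  apply Rabs_le. replace (9 * k ^ 2 * r - 2 * k' ^ 2 * (3 * k * q) + (k' ^ 2) ^ 2 * p)
    with (9 * (k^2 * r) - 6 * ((k'^2*k) * q) + k'^4 * p) by ring. split; nra.
Qed.

Lemma supp1 z : S1 z * S0 (z - 3) = 0.
Proof.
  destruct (Rle_dec z 3). rewrite (proj1 (S_lo (z-3) ltac:(lra))). ring.
  rewrite (proj1 (proj2 (S_hi z ltac:(lra)))). ring.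
Qed.
Lemma supp2 z : S1 (z - 3) * (1 - S0 z) = 0.
Proof.
  destruct (Rle_dec z 3). rewrite (proj2 (S_lo (z-3) ltac:(lra))). ring.
  rewrite (proj1 (S_hi z ltac:(lra))). ring.
Qed.




Lemma der_gen E a t1 (h h1 : R -> R) : (forall s, is_derive h s (h1 s)) -> forall s,
  is_derive (fun t => E * exp (- a * (t - t1)) * h t) s (E * exp (- a * (s - t1)) * (h1 s - a * h s)).
Proof.
  intros D1 s. assert (X : ex_derive h s) by (eexists; apply D1).
  auto_derive; auto. replace (Derive (fun x => h x) s) with (h1 s) by (symmetry; apply is_derive_unique; apply D1). unfold Rminus; ring.
Qed.

Lemma kmul k d a : 0 < k -> d <= a / k -> k * d <= a.
Proof. intros Hk H. apply (Rmult_le_compat_l k) in H; [|lra]. replace (k * (a / k)) with a in H by (field; lra). exact H. Qed.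
Lemma kmul' k d a : 0 < k -> a / k <= d -> a <= k * d.
Proof. intros Hk H. apply (Rmult_le_compat_l k) in H; [|lra]. replace (k * (a / k)) with a in H by (field; lra). exact H. Qed.

Theorem mainTheorem17 :
  exists B0 M : R,
  forall (k k' : nat), (1 <= k)%nat -> (k <= k')%nat -> (k' <= k + 10)%nat ->
  let kr := INR k in let kr' := INR k' in
  let u1 := fun x (_ : R) t => Cmult (cis (kr * x)) (RtoC (exp (- kr ^ 2 * t))) in
  let u2 := fun (_ : R) y t => Cmult (cis (kr' * y)) (RtoC (exp (- kr' ^ 2 * t))) in
  forall c1 t1 c2 : R, 0 < c1 -> 0 <= t1 -> 0 < c2 ->
    c1 * exp (- kr ^ 2 * t1) = c2 * exp (- kr' ^ 2 * t1) ->
  let T := t1 + 7 / (2 * kr) in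
  exists (u : R -> R -> R -> C) (B : R -> R -> R -> C * C)
         (f f1 f2 g g1 g2 : R -> C),
    (* u = f(t) e^{ikx} + g(t) e^{ik'y}, f, g of class C^2 *)
    C2_with f f1 f2 /\ C2_with g g1 g2 /\
    (forall x y t, u x y t = Cplus (Cmult (f t) (cis (kr * x))) (Cmult (g t) (cis (kr' * y)))) /\
    (* B continuous bounded vector field on T^2 x [t1, T] *)
    torus_periodic B /\ cont_on_slab B t1 T /\
    (forall x y t, t1 <= t <= T -> C2norm (B x y t) <= B0) /\
    (* the equation *)
    (forall x y t, t1 <= t <= T ->
       dt u x y t = Cplus (laplacian u x y t) (Bgrad B u x y t)) /\
    (forall x y t, t1 <= t <= t1 + 1 / (2 * kr) ->
       u x y t = Cmult (RtoC c1) (u1 x y t) /\ B x y t = (RtoC 0, RtoC 0)) /\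
    (forall x y t, t1 + 3 / kr <= t <= T ->
       u x y t = Cmult (RtoC c2) (u2 x y t) /\ B x y t = (RtoC 0, RtoC 0)) /\
    (forall t, t1 <= t <= T ->
       Cmod (f t) <= M * c1 * exp (- kr ^ 2 * t) /\
       Cmod (f1 t) <= M * c1 * kr ^ 2 * exp (- kr ^ 2 * t) /\
       Cmod (f2 t) <= M * c1 * kr ^ 4 * exp (- kr ^ 2 * t) /\
       Cmod (g t) <= M * c2 * exp (- kr' ^ 2 * t) /\
       Cmod (g1 t) <= M * c2 * kr' ^ 2 * exp (- kr' ^ 2 * t) /\
       Cmod (g2 t) <= M * c2 * kr' ^ 4 * exp (- kr' ^ 2 * t)).
Proof.
  exists (108 + 108 * exp 420), 600.
  intros k k' Hk Hkk' Hk10 kr kr' u1 u2 c1 t1 c2 Hc1 Ht1 Hc2 Hc T.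
  assert (Ik : 1 <= kr) by (unfold kr; apply (le_INR 1); lia).
  assert (Ikk : kr <= kr') by (unfold kr, kr'; apply le_INR; lia).
  assert (Ik10 : kr' <= kr + 10).
  { assert (H : INR k' <= INR (k + 10)) by (apply le_INR; lia). rewrite plus_INR in H.
    replace (INR 10) with 10 in H by (simpl; lra). exact H. }
  set (E := c1 * exp (- kr ^ 2 * t1)).
  set (F := fun t => E * exp (- kr^2 * (t - t1)) * phi kr t1 t).
  set (G := fun t => E * exp (- kr'^2 * (t - t1)) * psi kr t1 t).
  set (be := fun t => 3 * exp ((kr^2 - kr'^2) * (t - t1)) * S1 (sg kr t1 t)).
  set (ga := fun t => - (3 * (kr / kr') * exp ((kr'^2 - kr^2) * (t - t1)) * S1 (sg kr t1 t - 3))).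
  assert (Cf := C2_gen E (kr^2) t1 (phi kr t1) (phi1 kr t1) (phi2 kr t1) (phi_d kr t1) (phi1_d kr t1) (phi2_c kr t1)).
  assert (Cg := C2_gen E (kr'^2) t1 (psi kr t1) (psi1 kr t1) (psi2 kr t1) (psi_d kr t1) (psi1_d kr t1) (psi2_c kr t1)).
  eexists (uu kr kr' F G), (BB kr kr' be ga), _, _, _, _, _, _.
  split; [exact Cf|]. split; [exact Cg|].
  split; [intros; reflexivity|].
  split; [apply BB_per|].
  split.
  { apply BB_cont; intros s.
    - apply cont_ex. unfold be, sg. auto_derive. apply exS1.
    - apply cont_ex. unfold ga, sg. auto_derive. apply exS1. }
  assert (Hkr' : 0 < kr') by lra.
  assert (EE1 : forall t, E * exp (- kr ^ 2 * (t - t1)) = c1 * exp (- kr ^ 2 * t)).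
  { intros t. unfold E. rewrite Rmult_assoc, (exp_mul _ _ (- kr^2 * t)) by ring. reflexivity. }
  assert (EE2 : forall t, E * exp (- kr' ^ 2 * (t - t1)) = c2 * exp (- kr' ^ 2 * t)).
  { intros t. unfold E. rewrite Hc, Rmult_assoc, (exp_mul _ _ (- kr'^2 * t)) by ring. reflexivity. }
  split.
  {
    intros x y t [Ht1' HtT]. eapply Rle_trans; [apply BB_norm|].
    assert (Hd : kr * (t - t1) <= 7/2).
    { apply kmul. lra. unfold T in HtT. replace (7 / 2 / kr) with (7 / (2 * kr)) by (field; lra). lra. }
    assert (Hτ : t - t1 <= 7/2) by nra.
    assert (X1 : exp ((kr ^ 2 - kr' ^ 2) * (t - t1)) <= 1).
    { rewrite <- exp_0. apply exp_le. assert (kr^2 <= kr'^2) by nra.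
      assert (0 <= (kr'^2 - kr^2) * (t - t1)) by (apply Rmult_le_pos; lra). lra. }
    assert (X2 : exp ((kr' ^ 2 - kr ^ 2) * (t - t1)) <= exp 420).
    { apply exp_le. assert (0 <= kr' - kr <= 10) by lra.
      replace ((kr' ^ 2 - kr ^ 2) * (t - t1)) with ((kr' - kr) * ((kr' + kr) * (t - t1))) by ring.
      assert (0 <= (kr' + kr) * (t - t1) <= 42) by (split; nra). nra. }
    assert (P1 := exp_pos ((kr ^ 2 - kr' ^ 2) * (t - t1))).
    assert (P2 := exp_pos ((kr' ^ 2 - kr ^ 2) * (t - t1))).
    assert (R1 : 0 < kr / kr' <= 1).
    { split. apply Rdiv_lt_0_compat; lra. apply Rmult_le_reg_r with kr'. lra.
      unfold Rdiv. rewrite Rmult_assoc, Rinv_l by lra. lra. }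
    destruct (Sb (sg kr t1 t)) as [_ [Sa _]]. destruct (Sb (sg kr t1 t - 3)) as [_ [Sc _]].
    apply Rplus_le_compat.
    - unfold be; cbv beta. apply Rabs_le. set (e := exp ((kr ^ 2 - kr' ^ 2) * (t - t1))) in *. set (s := S1 _) in *.
      assert (-(36*e) <= e*s <= 36*e) by (split; nra). split; nra.
    - unfold ga; cbv beta. apply Rabs_le. set (e := exp ((kr' ^ 2 - kr ^ 2) * (t - t1))) in *. set (s := S1 (sg kr t1 t - 3)) in *. set (r := kr / kr') in *.
      assert (0 < r * e <= exp 420) by (split; nra).
      assert (-(36 * (r*e)) <= (r*e) * s <= 36 * (r*e)) by (split; nra).
      split; nra. }
  split.
  {
    intros x y t _.
    apply (pde_gen _ _ _ _ _ _ _ _ _ _ _ (der_gen E (kr^2) t1 _ _ (phi_d kr t1)) (der_gen E (kr'^2) t1 _ _ (psi_d kr t1))).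
    - unfold F, G, ga, phi, phi1, psi. set (z := sg kr t1 t).
      rewrite <- (exp_mul ((kr'^2 - kr^2)*(t-t1)) (-kr'^2*(t-t1)) (-kr^2*(t-t1))) by ring.
      assert (H := supp2 z).
      set (e3 := exp ((kr'^2 - kr^2)*(t-t1))). set (e2 := exp (-kr'^2*(t-t1))).
      transitivity (-(3*kr*E*(e3*e2)*S1(z-3))). ring.
      transitivity (-(3*kr*E*(e3*e2)*(S1(z-3)*S0 z))).
      replace (S1 (z-3) * S0 z) with (S1 (z-3)) by lra. reflexivity.
      field. lra.
    - unfold F, G, be, phi, psi, psi1. set (z := sg kr t1 t).
      rewrite <- (exp_mul ((kr^2 - kr'^2)*(t-t1)) (-kr^2*(t-t1)) (-kr'^2*(t-t1))) by ring.
      assert (H := supp1 z).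
      set (e3 := exp ((kr^2 - kr'^2)*(t-t1))). set (e2 := exp (-kr^2*(t-t1))).
      transitivity (3*kr*E*(e3*e2)*S1 z). ring.
      transitivity (3*kr*E*(e3*e2)*(S1 z * (1 - S0 (z - 3)))).
      replace (S1 z * (1 - S0 (z - 3))) with (S1 z) by lra. reflexivity.
      ring. }
  split.
  {
    intros x y t [Ht1' Ht2].
    assert (Hd : kr * (t - t1) <= 1/2).
    { apply kmul. lra. replace (1 / 2 / kr) with (1 / (2 * kr)) by (field; lra). lra. }
    assert (Hz : sg kr t1 t <= 0) by (unfold sg; lra).
    destruct (S_lo _ Hz) as [Z0 Z1]. destruct (S_lo (sg kr t1 t - 3) ltac:(lra)) as [Z2 Z3].
    split.
    - unfold uu, u1. unfold F, G, phi, psi. rewrite Z0, Z2. rewrite Rmult_assoc.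
      replace (1 - 0) with 1 by ring. rewrite Rmult_1_r, EE1.
      unfold Cplus, Cmult, RtoC, cis; simpl. f_equal; ring.
    - apply BB_zero; [unfold be; rewrite Z1 | unfold ga; rewrite Z3]; ring. }
  split.
  {
    intros x y t [Ht1' Ht2].
    assert (Hd : 3 <= kr * (t - t1)).
    { apply kmul'. lra. lra. }
    assert (Hz : 3 <= sg kr t1 t) by (unfold sg; lra).
    assert (Hz' : 3 <= sg kr t1 t - 3) by (unfold sg; lra).
    destruct (S_hi _ Hz) as [Z0 [Z1 _]]. destruct (S_hi _ Hz') as [Z2 [Z3 _]].
    split.
    - unfold uu, u2. unfold F, G, phi, psi. rewrite Z0, Z2.
      replace (1 - 1) with 0 by ring. rewrite Rmult_1_r, EE2.
      unfold Cplus, Cmult, RtoC, cis; simpl. f_equal; ring.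
    - apply BB_zero; [unfold be; rewrite Z1 | unfold ga; rewrite Z3]; ring. }
  {
    intros t _.
    assert (Ec1 : c1 * exp (- kr ^ 2 * t1) = E) by reflexivity.
    assert (Ec2 : c2 * exp (- kr' ^ 2 * t1) = E) by (unfold E; rewrite Hc; reflexivity).
    repeat split.
    - rewrite <- (Rmult_1_r (600 * c1)). apply (bnd E c1 (kr^2) t1 t); auto. apply hb1.
    - apply (bnd E c1 (kr^2) t1 t); auto. apply hb2; auto.
    - apply (bnd E c1 (kr^2) t1 t); auto. apply hb3; auto.
    - rewrite <- (Rmult_1_r (600 * c2)). apply (bnd E c2 (kr'^2) t1 t); auto. apply gb1.
    - apply (bnd E c2 (kr'^2) t1 t); auto. apply gb2; auto.
    - apply (bnd E c2 (kr'^2) t1 t); auto. apply gb3; auto. }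
Qed.
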